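(* Let $p$ be a prime and $k,\ell$ integers with $k>0$, $\ell\ge0$; put $q=p^k$ and $Q=p^{\ell}$. Let $c\in\mathbb{F}_{q^3}$ and define \[ f(X)=(X^q-X)^3+c^{q^2}X^{q^2Q}+c^qX^{qQ}+cX^{Q}, \] i.e. $f(X)=X^3\circ(X^q-X)+(X^{q^2}+X^q+X)\circ cX^Q$. Then $f(X)$ permutes $\mathbb{F}_{q^3}$ if and only if $q\equiv 2\pmod 3$ and $c^{q^2}+c^q+c\ne 0$.
   Context: A polynomial permutes $\mathbb{F}_{q^3}$ if the induced map $\mathbb{F}_{q^3}\to\mathbb{F}_{q^3}$ is a bijection. *)

(* Defs.v *)
From mathcomp Require Import all_boot all_order all_algebra all_field.
Set Implicit Arguments. Unset Strict Implicit. Unset Printing Implicit Defensive.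
Import GRing.Theory.
Local Open Scope ring_scope.

Definition f_poly (F : comNzRingType) (q Q : nat) (c : F) : {poly F} :=
  ('X^q - 'X) ^+ 3 + (c ^+ (q ^ 2)%N)%:P * 'X^(q ^ 2 * Q)
  + (c ^+ q)%:P * 'X^(q * Q) + c%:P * 'X^Q.

Definition permutes_poly (F : finFieldType) (P : {poly F}) : Prop :=
  bijective (fun x : F => P.[x]).

(* Main.v *)
Require Import Defs.
From mathcomp Require Import all_boot all_order all_algebra all_field.
From mathcomp Require Import zify ring.
Set Implicit Arguments. Unset Strict Implicit. Unset Printing Implicit Defensive.
Import GRing.Theory.
Local Open Scope ring_scope.

Section Generic.
Variable F : finFieldType.

Lemma exists_nonroot (P : {poly F}) : (0 < size P <= #|F|)%N -> exists x, P.[x] != 0.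
Proof.
case/andP=> s0 sF; apply/existsP; rewrite -negb_forall; apply/negP=> /forallP H.
have P0 : P != 0 by rewrite -size_poly_eq0 -lt0n.
have A : all (root P) (enum F) by apply/allP=> x _; rewrite rootE; exact: H.
by have := max_poly_roots P0 A (enum_uniq _); rewrite -cardE ltnNge sF.
Qed.

Lemma size_XnsubX n : (1 < n)%N -> size ('X^n - 'X : {poly F}) = n.+1.
Proof. by move=> n1; rewrite size_polyDl size_polyXn // size_polyN size_polyX. Qed.

Lemma cube1 (u : F) n : (n %% 3 = 2)%N -> u ^+ n = u -> u ^+ 3 = 1 -> u = 1.
Proof.
move=> hn hu h3; have u0 : u != 0 by apply/eqP => u0; move: h3; rewrite u0 expr0n => /eqP; rewrite eq_sym oner_eq0.
have : u ^+ n = u ^+ 2 by rewrite (divn_eq n 3) hn exprD mulnC exprM h3 expr1n mul1r.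
rewrite hu expr2 => /(congr1 (fun t => t / u)); rewrite mulfK // divff //.
Qed.
End Generic.

Section Main.
Variables (F : finFieldType) (p k : nat).
Hypotheses (pr : prime p) (k0 : (0 < k)%N) (hF : #|F| = ((p ^ k) ^ 3)%N).

Lemma chp : p \in [pchar F].
Proof. by apply: (@card_finPcharP F p (k * 3)) => //; rewrite expnM. Qed.

Lemma frobD n (x y : F) : (x + y) ^+ (p ^ n) = x ^+ (p ^ n) + y ^+ (p ^ n).
Proof. apply: exprDn_pchar; rewrite (eq_pnat _ (pcharf_eq chp)) pnatX pnat_id //. Qed.

Lemma frobN n (x : F) : (- x) ^+ (p ^ n) = - x ^+ (p ^ n).
Proof. apply: exprNn_pchar; rewrite (eq_pnat _ (pcharf_eq chp)) pnatX pnat_id //. Qed.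

Lemma frobB n (x y : F) : (x - y) ^+ (p ^ n) = x ^+ (p ^ n) - y ^+ (p ^ n).
Proof. by rewrite frobD frobN. Qed.

Definition fq (x : F) := x ^+ (p ^ k).
Lemma fqD x y : fq (x + y) = fq x + fq y. Proof. exact: frobD. Qed.
Lemma fqN x : fq (- x) = - fq x. Proof. exact: frobN. Qed.
Lemma fqB x y : fq (x - y) = fq x - fq y. Proof. exact: frobB. Qed.
Lemma fqM x y : fq (x * y) = fq x * fq y. Proof. exact: exprMn. Qed.
Lemma fqV x : fq (x^-1) = (fq x)^-1. Proof. exact: exprVn. Qed.
Lemma fqX x n : fq (x ^+ n) = (fq x) ^+ n. Proof. exact: exprAC. Qed.
Lemma fq1 : fq 1 = 1. Proof. exact: expr1n. Qed.
Lemma fq3 x : fq (fq (fq x)) = x.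
Proof.
rewrite /fq -!exprM; have -> : (p ^ k * (p ^ k * p ^ k) = (p ^ k) ^ 3)%N by rewrite !expnS expn0 muln1.
by rewrite -hF expf_card.
Qed.
Lemma fq2E x : fq (fq x) = x ^+ ((p ^ k) ^ 2).
Proof. by rewrite /fq -exprM mulnn. Qed.

Definition Tr (x : F) := fq (fq x) + fq x + x.
Definition Lx (x : F) := fq x - x.
Definition e2 (y : F) := y * fq y + fq y * fq (fq y) + fq (fq y) * y.
Definition Nm (y : F) := y * fq y * fq (fq y).

Lemma TrD x y : Tr (x + y) = Tr x + Tr y.
Proof. by rewrite /Tr !fqD; ring. Qed.
Lemma TrB x y : Tr (x - y) = Tr x - Tr y.
Proof. by rewrite /Tr !fqB; ring. Qed.
Lemma TrZ b u : fq b = b -> Tr (b * u) = b * Tr u.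
Proof. by move=> hb; rewrite /Tr !fqM !hb; ring. Qed.
Lemma Tr_Fq x : fq (Tr x) = Tr x.
Proof. by rewrite /Tr !fqD fq3; ring. Qed.
Lemma Tr_L x : Tr (Lx x) = 0.
Proof. by rewrite /Tr /Lx !fqB fq3; ring. Qed.
Lemma Nm_Fq y : fq (Nm y) = Nm y.
Proof. by rewrite /Nm !fqM fq3; ring. Qed.
Lemma e2_Fq y : fq (e2 y) = e2 y.
Proof. by rewrite /e2 !fqD !fqM fq3; ring. Qed.
Lemma e2Z b y : fq b = b -> e2 (b * y) = b ^+ 2 * e2 y.
Proof. by move=> hb; rewrite /e2 !fqM !hb; ring. Qed.
Lemma cubic y : Tr y = 0 -> y ^+ 3 + e2 y * y = Nm y.
Proof.
move=> hy; have ea : fq (fq y) = - (fq y + y).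
  by apply/eqP; rewrite -addr_eq0 addrA; apply/eqP.
by rewrite /e2 /Nm ea; ring.
Qed.
Lemma Tr_of_Fq a : fq a = a -> Tr a = 3%:R * a.
Proof. by move=> ha; rewrite /Tr !ha; ring. Qed.

Definition fQ l (x : F) := x ^+ (p ^ l).
Lemma fQ_fq l x : fQ l (fq x) = fq (fQ l x). Proof. exact: exprAC. Qed.

Lemma feval (l : nat) (c x : F) :
  (f_poly (p ^ k) (p ^ l) c).[x] = (Lx x) ^+ 3 + Tr (c * x ^+ (p ^ l)).
Proof.
rewrite /f_poly !hornerE /Lx /Tr fq2E /fq !exprMn -!exprM.
by rewrite [((p ^ k) ^ 2 * _)%N]mulnC [((p ^ k) * _)%N]mulnC.
Qed.


Lemma p3_of (hq : (p ^ k %% 3 = 2)%N) : p != 3.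
Proof. apply/eqP=> p3; move: hq; rewrite p3 -(prednK k0) expnS modnMr. by []. Qed.

Lemma three_neq0 : p != 3 -> 3%:R != 0 :> F.
Proof.
move=> hp; rewrite -(dvdn_pcharf chp); apply/negP => h.
have p1 : p != 1%N by apply/eqP => p1; move: pr; rewrite p1.
by move/eqP: hp; apply; apply/(prime_nt_dvdP (isT : prime 3) p1).
Qed.

Lemma FqT0 a : p != 3 -> fq a = a -> Tr a = 0 -> a = 0.
Proof.
move=> hp ha; rewrite Tr_of_Fq // => /eqP; rewrite mulf_eq0 (negbTE (three_neq0 hp)) /=.
by move/eqP.
Qed.

Lemma Zlem (h3 : ((p ^ k) ^ 3 %% 3 = 2)%N) y : y != 0 -> fq (y ^+ 3) = y ^+ 3 -> fq y = y.
Proof.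
move=> y0; rewrite fqX => e.
have : fq y / y = 1.
  apply: (cube1 h3); first by rewrite -hF expf_card.
  by rewrite exprMn e exprVn divff // expf_neq0.
by move/(congr1 (fun t => t * y)); rewrite mulfVK // mul1r.
Qed.

Lemma e2_0 (hq : (p ^ k %% 3 = 2)%N) y : Tr y = 0 -> e2 y = 0 -> y = 0.
Proof.
move=> ty ey; have h3 : ((p ^ k) ^ 3 %% 3 = 2)%N by rewrite -modnXm hq.
have c := cubic ty; rewrite ey mul0r addr0 in c.
have [->//|y0] := eqVneq y 0.
apply: FqT0 (p3_of hq) _ ty; apply: (Zlem h3 y0); rewrite c; exact: Nm_Fq.
Qed.

Lemma Mlem (hq : (p ^ k %% 3 = 2)%N) y y' :
  Tr y = 0 -> Tr y' = 0 -> e2 y * y = e2 y' * y' -> y = y'.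
Proof.
move=> ty ty' e.
have Z0 : forall u, Tr u = 0 -> e2 u * u = 0 -> u = 0.
  by move=> u tu /eqP; rewrite mulf_eq0 => /orP[/eqP/(e2_0 hq tu)|/eqP].
have [y0|y0] := eqVneq y 0; first by rewrite y0 (Z0 y') // -e y0 mulr0.
have [y'0|y'0] := eqVneq y' 0; first by move: y0; rewrite (Z0 y) ?eqxx // e y'0 mulr0.
have ey0 : e2 y != 0 by apply: contra y0 => /eqP h; apply/eqP/e2_0.
have ey'0 : e2 y' != 0 by apply: contra y'0 => /eqP h; apply/eqP/e2_0.
set l := e2 y / e2 y'.
have hl : fq l = l by rewrite /l fqM fqV !e2_Fq.
have yl : y' = l * y.
  by apply: (mulfI ey'0); rewrite /l -e; field.
have l3 : l ^+ 3 = 1.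
  move: e; rewrite yl e2Z // => /eqP; rewrite -subr_eq0.
  have -> : e2 y * y - l ^+ 2 * e2 y * (l * y) = (e2 y * y) * (1 - l ^+ 3) by ring.
  rewrite mulf_eq0 mulf_eq0 (negbTE ey0) (negbTE y0) /= subr_eq0 => /eqP <-. by [].
by rewrite yl (cube1 hq hl l3) mul1r.
Qed.


Lemma fQ_Fq l a : fq a = a -> fq (a ^+ (p ^ l)) = a ^+ (p ^ l).
Proof. by move=> ha; rewrite fqX ha. Qed.

Lemma shift l c x a : fq a = a ->
  (f_poly (p ^ k) (p ^ l) c).[x + a] = (f_poly (p ^ k) (p ^ l) c).[x] + a ^+ (p ^ l) * Tr c.
Proof.
move=> ha; rewrite !feval frobD mulrDr TrD [c * a ^+ _]mulrC (TrZ _ (fQ_Fq l ha)).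
have -> : Lx (x + a) = Lx x by rewrite /Lx fqD ha; ring.
by ring.
Qed.

Lemma inj_dir l c (hq : (p ^ k %% 3 = 2)%N) : Tr c != 0 ->
  injective (fun x => (f_poly (p ^ k) (p ^ l) c).[x]).
Proof.
move=> hc x x' /= e; set y := Lx x; set y' := Lx x'.
have ty : Tr y = 0 := Tr_L x. have ty' : Tr y' = 0 := Tr_L x'.
have hp3 := p3_of hq.
have d3 : y ^+ 3 - y' ^+ 3 = Tr (c * x' ^+ (p ^ l)) - Tr (c * x ^+ (p ^ l)).
  move: e; rewrite !feval -/y -/y' => e.
  transitivity ((y ^+ 3 + Tr (c * x ^+ (p ^ l))) - (y' ^+ 3 + Tr (c * x' ^+ (p ^ l)))
     + Tr (c * x' ^+ (p ^ l)) - Tr (c * x ^+ (p ^ l))); first by ring.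
  by rewrite e; ring.
have w0 : e2 y * y - e2 y' * y' = 0.
  apply: FqT0 hp3 _ _.
    have -> : e2 y * y - e2 y' * y' = (Nm y - Nm y') - (y ^+ 3 - y' ^+ 3).
      by rewrite -(cubic ty) -(cubic ty'); ring.
    by rewrite d3 !fqB !Nm_Fq !Tr_Fq.
  by rewrite TrB !TrZ ?e2_Fq // ty ty' !mulr0 subr0.
have yy : y = y' by apply: (Mlem hq ty ty'); apply/eqP; rewrite -subr_eq0 w0.
have ha : fq (x - x') = x - x'.
  by apply/eqP; rewrite fqB -subr_eq0; apply/eqP; move: yy; rewrite /y /y' /Lx => /eqP; rewrite -subr_eq0 => /eqP <-; ring.
have := shift l c x' ha; rewrite addrC subrK e => /eqP; rewrite -subr_eq0 opprD addrA subrr add0r oppr_eq0.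
rewrite mulf_eq0 (negbTE hc) orbF expf_eq0 subr_eq0 => /andP[_ /eqP]. by [].
Qed.


Lemma q_gt1 : (1 < p ^ k)%N.
Proof. by rewrite -{1}(expn0 p) ltn_exp2l ?prime_gt1. Qed.

Lemma Trc_neq0 l (c : F) : injective (fun x => (f_poly (p ^ k) (p ^ l) c).[x]) -> Tr c != 0.
Proof.
move=> inj; apply/eqP => h0; have := shift l c 0 fq1.
rewrite h0 mulr0 addr0 add0r => /inj /eqP; by rewrite oner_eq0.
Qed.

Lemma case0 l (c : F) : (p ^ k %% 3 = 0)%N -> ~ bijective (fun x => (f_poly (p ^ k) (p ^ l) c).[x]).
Proof.
move=> hq [g _ gK].
have p3 : p = 3%N.
  have : (3 %| p ^ k)%N by rewrite /dvdn hq.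
  by rewrite Euclid_dvdX // k0 andbT => /(prime_nt_dvdP pr (isT : 3 != 1%N)) /esym.
have c3 : 3%:R = 0 :> F by have := pcharf0 chp; rewrite p3.
have cubeD x y : (x + y) ^+ 3 = x ^+ 3 + y ^+ 3 :> F.
  by have := frobD 1 x y; rewrite p3 expn1.
have Tr3 u : Tr (u ^+ 3) = (Tr u) ^+ 3 by rewrite /Tr !cubeD !fqX.
have [z hz] : exists z, Tr z != 0.
  have q1 := q_gt1.
  have s1 : size ('X^(p ^ k) + 'X : {poly F}) = (p ^ k).+1.
    by rewrite size_polyDl size_polyXn // size_polyX.
  pose P : {poly F} := 'X^((p ^ k) ^ 2) + 'X^(p ^ k) + 'X.
  have sz : (0 < size P <= #|F|)%N.
    rewrite /P -addrA size_polyDl ?s1 size_polyXn //; last by rewrite ltnS; nia.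
    rewrite hF; apply/andP; split => //; nia.
  have [z hz] := exists_nonroot sz.
  by exists z; move: hz; rewrite !hornerE /Tr fq2E.
have := gK z; rewrite feval => e.
move: hz; rewrite -e TrD Tr3 Tr_L (Tr_of_Fq (Tr_Fq _)) c3 mul0r expr0n addr0 eqxx. by [].
Qed.


Lemma case1 l (c : F) : (p ^ k %% 3 = 1)%N -> Tr c != 0 ->
  ~ injective (fun x => (f_poly (p ^ k) (p ^ l) c).[x]).
Proof.
move=> hq hc inj.
have q1 := q_gt1.
set t := (p ^ k %/ 3)%N.
have qt : (p ^ k = 3 * t + 1)%N by rewrite /t {1}(divn_eq (p ^ k) 3) hq; lia.
have t1 : (0 < t)%N by lia.
set m := (9 * t ^ 3 + 9 * t ^ 2 + 3 * t)%N.
have q3 : ((p ^ k) ^ 3 = 3 * m + 1)%N by rewrite qt /m; nia.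
pose P : {poly F} := 'X^(m.+1) - 'X.
have sz : (0 < size P <= #|F|)%N.
  by rewrite /P size_XnsubX; [rewrite hF q3 /m; apply/andP; split => //; nia | rewrite /m; nia].
have [x0 hx0] := exists_nonroot sz.
move: hx0; rewrite /P !hornerE subr_eq0 => hx0.
have x00 : x0 != 0 by apply: contra hx0 => /eqP ->; rewrite expr0n.
have x3m : x0 ^+ (3 * m) = 1.
  apply: (mulIf x00); rewrite mul1r -exprSr -addn1 -q3 -hF; exact: expf_card.
set w := x0 ^+ m.
have w3 : w ^+ 3 = 1 by rewrite /w -exprM mulnC.
have w1 : w != 1 by apply: contra hx0 => /eqP h; rewrite exprSr -/w h mul1r.
have wq : fq w = w.
  by rewrite /fq /w -exprM qt mulnDr muln1 exprD mulnA [(m * 3)%N]mulnC exprM x3m expr1n mul1r.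
pose P1 : {poly F} := 'X^(p ^ k) - 'X.
have sz1 : (0 < size P1 <= #|F|)%N.
  by rewrite /P1 size_XnsubX // hF; apply/andP; split => //; nia.
have [x1 hx1] := exists_nonroot sz1.
have L1 : Lx x1 != 0 by move: hx1; rewrite /P1 !hornerE.
set x2 := w * x1.
have L2 : Lx x2 = w * Lx x1 by rewrite /x2 /Lx fqM wq; ring.
set d := (f_poly (p ^ k) (p ^ l) c).[x1] - (f_poly (p ^ k) (p ^ l) c).[x2].
have dE : d = Tr (c * x1 ^+ (p ^ l)) - Tr (c * x2 ^+ (p ^ l)).
  by rewrite /d !feval L2 exprMn w3 mul1r; ring.
set e := d / Tr c.
have eq : fq e = e by rewrite /e fqM fqV Tr_Fq dE fqB !Tr_Fq.
have injQ : injective (fun z : F => z ^+ (p ^ l)).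
  move=> z z' /= /eqP; rewrite -subr_eq0 -frobB expf_eq0 subr_eq0 => /andP[_ /eqP]. by [].
have [g gK Kg] := injF_bij injQ.
set a := g e.
have aQ : a ^+ (p ^ l) = e by rewrite /a Kg.
have aq : fq a = a by apply: injQ => /=; have := fQ_fq l a; rewrite /fQ => ->; rewrite aQ.
have := shift l c x2 aq; rewrite aQ /e divfK // /d addrCA subrr addr0 => /inj h.
have := congr1 Lx h; rewrite /Lx fqD aq -/(Lx x2) -/(Lx x1).
rewrite (_ : fq x2 + a - (x2 + a) = Lx x2); last by rewrite /Lx; ring.
rewrite L2 => /eqP; rewrite -subr_eq0 -{2}(mul1r (Lx x1)) -mulrBl mulf_eq0 (negbTE L1) orbF subr_eq0.
by rewrite (negbTE w1).
Qed.

End Main.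

Theorem theorem1p8 (F : finFieldType) (p k l : nat) (c : F) :
  prime p -> (0 < k)%N -> #|F| = ((p ^ k) ^ 3)%N ->
  permutes_poly (f_poly (p ^ k)%N (p ^ l)%N c) <->
  ((p ^ k) %% 3 = 2)%N /\ c ^+ ((p ^ k) ^ 2)%N + c ^+ (p ^ k)%N + c != 0.
Proof.
move=> pr k0 hF.
have trE : c ^+ ((p ^ k) ^ 2)%N + c ^+ (p ^ k)%N + c = Tr p k c by rewrite /Tr fq2E.
rewrite trE /permutes_poly; split.
  move=> bij; have inj := bij_inj bij.
  have hc := Trc_neq0 pr hF inj; split => //.
  have lt3 : ((p ^ k) %% 3 < 3)%N by rewrite ltn_mod.
  case e : ((p ^ k) %% 3)%N lt3 => [|[|[|n]]] // _.
  - by case: (case0 pr k0 hF e bij).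
  - by case: (case1 pr k0 hF e hc inj).
case=> hq hc; have := @inj_dir F p k pr k0 hF l c hq hc; exact: injF_bij.
Qed.
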